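(* Let $G$ be a graph with vertices $a,b,c,d$. When the Laplacian $L$ of $G$ is used as Hamiltonian, there is no perfect state transfer between $e_a+e_b$ and $e_c-e_d$; that is, there are no $t\ge 0$ and $\gamma\in\mathbb{C}$ with $|\gamma|=1$ such that $\exp(itL)(e_a+e_b)=\gamma(e_c-e_d)$ or $\exp(itL)(e_c-e_d)=\gamma(e_a+e_b)$.
   Context: $L=\Delta-A$ where $\Delta$ is the degree matrix and $A$ the adjacency matrix of $G$; $e_v$ is the standard basis vector of vertex $v$. *)

(* Defs.v *)
From HB Require Import structures.
From mathcomp Require Import all_boot all_order all_algebra.
From mathcomp Require Import all_classical all_reals all_analysis.
From mathcomp Require Import complex.
Set Implicit Arguments. Unset Strict Implicit. Unset Printing Implicit Defensive.
Import Order.TTheory GRing.Theory Num.Theory numFieldNormedType.Exports.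
Local Open Scope ring_scope.
Local Open Scope complex_scope.

Definition simple_graph (n : nat) (adj : rel 'I_n) : Prop :=
  symmetric adj /\ irreflexive adj.

Definition deg (n : nat) (adj : rel 'I_n) (v : 'I_n) : nat :=
  #|[set w | adj v w]|.

Definition laplacian (R : rcfType) (n : nat) (adj : rel 'I_n) : 'M[R[i]]_n :=
  \matrix_(u, v) ((u == v)%:R * (deg adj u)%:R - (adj u v)%:R).

Definition evec (R : rcfType) (n : nat) (v : 'I_n) : 'cV[R[i]]_n :=
  delta_mx v 0.

Definition expmx (R : realType) (n : nat) (M : 'M[R[i]]_n) : 'M[R[i]]_n :=
  limn (fun N : nat => \sum_(k < N) ((k`!)%:R)^-1 *: M ^+ k).

(* Main.v *)
Require Import Defs.
From HB Require Import structures.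
From mathcomp Require Import all_boot all_order all_algebra.
From mathcomp Require Import all_classical all_reals all_analysis.
From mathcomp Require Import complex.
Import Order.TTheory GRing.Theory Num.Theory numFieldNormedType.Exports.
Local Open Scope ring_scope.
Local Open Scope complex_scope.
Section S.
Variables (R : realType) (n : nat) (adj : rel 'I_n).
Hypothesis sg : simple_graph adj.
Let C := R[i].
Let J : 'rV[C]_n := const_mx 1.

Lemma J_lap : J *m laplacian R adj = 0.
Proof.
case: sg => sym irr.
apply/rowP => w; rewrite !mxE.
under eq_bigr do rewrite !mxE mul1r.
rewrite sumrB (bigD1 w) //= eqxx mul1r big1; last first.
  by move=> u /negPf ->; rewrite mul0r.
rewrite addr0 /deg.
have -> : \sum_u ((adj u w)%:R : C) = (\sum_u (adj w u : nat))%:R.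
  by rewrite natr_sum; apply: eq_bigr => u _; rewrite sym.
rewrite -sum1_card big_mkcond /=.
idtac.
apply/eqP; rewrite subr_eq0; apply/eqP; congr (_%:R); apply: eq_bigr => u _.
by rewrite inE; case: (adj w u).
Qed.

Lemma J_pow (M : 'M[C]_n) k : J *m M = 0 -> J *m M ^+ k.+1 = 0.
Proof.
by move=> H; rewrite exprS -mulmxE mulmxA H mul0mx.
Qed.

Lemma J_S (t : R) N : (0 < N)%N ->
  J *m (\sum_(k < N) ((k`!)%:R)^-1 *: ('i * t%:C *: laplacian R adj) ^+ k) = J.
Proof.
case: N => // N _.
rewrite mulmx_sumr big_ord_recl /= expr0 fact0 invr1 scale1r -[1]/(1%:M) mulmx1.
rewrite big1 ?addr0 // => k _.
by rewrite -scalemxAr J_pow ?scaler0 // -scalemxAr J_lap scaler0.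
Qed.
End S.
Section T2sec.
Local Open Scope classical_set_scope.
Definition MT (R : realType) n : normedModType R[i] := 'M[R[i]]_n.

Definition CT (R : realType) : numFieldType := R[i].
Definition csum (R : realType) n (X : 'M[R[i]]_n) w : CT R :=
  ((const_mx 1 : 'rV[R[i]]_n) *m X) 0 w.

Lemma expmx_cases (R : realType) (n : nat) (M : 'M[R[i]]_n) :
  (forall N, (0 < N)%N -> const_mx 1 *m (\sum_(k < N) ((k`!)%:R)^-1 *: M ^+ k) = const_mx 1 :> 'rV[R[i]]_n) ->
  (const_mx 1 : 'rV[R[i]]_n) *m expmx M = const_mx 1 \/ exists p : R[i], expmx M = \matrix_(i, j) p.
Proof.
move=> HS.
set S := (fun N : nat => (\sum_(k < N) ((k`!)%:R)^-1 *: M ^+ k : MT R n)).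
have [[l Hl]|Hn] := pselect (exists l : MT R n, S @ \oo --> l).
  left.
  have HE : S @ \oo --> (expmx M : MT R n).
    rewrite /expmx /lim /lim_in -/S; exact: (@xgetI _ point (fun l0 => S @ \oo --> l0) l Hl).
  apply/rowP => w; rewrite [RHS]mxE.
  have H1 : (fun N => @csum R n (S N) w) @ \oo --> @csum R n (expmx M) w.
    rewrite /csum.
    rewrite mxE; under eq_cvg do rewrite mxE.
    apply: cvg_big => //.
      exact: add_continuous.
    move=> u _; under eq_cvg do rewrite mxE.
    rewrite mxE.
    apply: cvgM; first exact: cvg_cst.
    have X := @coord_continuous _ _ _ u w (expmx M). have Y := cvg_comp _ _ HE X. exact: Y.
  have H2 : (fun N => @csum R n (S N) w) @ \oo --> (1 : CT R).
    rewrite /csum.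
    apply: cvg_near_cst; near=> N.
    by rewrite /S HS ?mxE //; near: N; exists 1%N.
  exact: (cvg_unique _ H1 H2).
right.
eexists.
rewrite /expmx /lim /lim_in -/S xgetPN; last by move=> l Hl; apply: Hn; exists l.
apply/matrixP => i j; rewrite !mxE; reflexivity.
Unshelve. all: by end_near.
Qed.
End T2sec.
Lemma mx_evec (R : realType) m n (A : 'M[R[i]]_(m, n)) v x :
  (A *m evec R v) x 0 = A x v.
Proof.
rewrite mxE (bigD1 v) //= !mxE !eqxx mulr1 big1 ?addr0 // => u /negPf hu.
by rewrite mxE hu mulr0.
Qed.

Lemma row_evec (R : realType) n m (A : 'M[R[i]]_(m, n)) v :
  A *m evec R v = col v A.
Proof. by apply/matrixP => x y; rewrite ord1 mx_evec !mxE. Qed.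

Lemma evecE (R : realType) n (v x : 'I_n) : evec R v x 0 = (x == v)%:R.
Proof. by rewrite mxE eqxx andbT. Qed.

Theorem mainTheorem8 (R : realType) (n : nat) (adj : rel 'I_n)
    (a b c d : 'I_n) :
  simple_graph adj -> a != b -> c != d ->
  ~ (exists (t : R) (g : R[i]), 0 <= t /\ `|g| = 1 /\
       (expmx ('i * t%:C *: laplacian R adj) *m (evec R a + evec R b)
          = g *: (evec R c - evec R d)
        \/
        expmx ('i * t%:C *: laplacian R adj) *m (evec R c - evec R d)
          = g *: (evec R a + evec R b))).
Proof.
move=> sg ab cd [t [g [_ [g1 H]]]].
have g0 : g != 0 by apply/eqP => g0; move: g1; rewrite g0 normr0 => /eqP; rewrite eq_sym oner_eq0.
have two : (2 : R[i]) != 0 by rewrite pnatr_eq0.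
set E := expmx _ in H.
have [hJ|[p hp]] := @expmx_cases R n _ (@J_S R n adj sg t).
  have key : forall v : 'cV[R[i]]_n, (const_mx 1 : 'rV[R[i]]_n) *m (E *m v) = const_mx 1 *m v.
    by move=> v; rewrite mulmxA hJ.
  case: H => H.
    move: (key (evec R a + evec R b)); rewrite H -scalemxAr !mulmxDr ?mulmxN !row_evec.
    move/matrixP => /(_ 0 0); rewrite !mxE subrr mulr0 => /eqP.
    by rewrite eq_sym (negPf two).
  move: (key (evec R c - evec R d)); rewrite H -scalemxAr !mulmxDr ?mulmxN !row_evec.
  move/matrixP => /(_ 0 0); rewrite !mxE subrr => /eqP.
  by rewrite mulf_eq0 (negPf g0) -mulr2n (negPf two).
case: H => H.
  have hc := congr1 (fun X : 'cV[R[i]]_n => X c 0) H; have hd := congr1 (fun X : 'cV[R[i]]_n => X d 0) H.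
  move: hc hd; rewrite /= !mulmxDr !row_evec /E hp !mxE !eqxx !andbT.
  rewrite (negPf cd) eq_sym (negPf cd) => -> /eqP.
  rewrite subr0 sub0r mulr1 mulrN1 -subr_eq0 opprK -mulr2n -mulr_natr mulf_eq0.
  by rewrite (negPf g0) (negPf two).
have ha := congr1 (fun X : 'cV[R[i]]_n => X a 0) H.
move: ha; rewrite /= !mulmxDr ?mulmxN !row_evec /E hp !mxE !eqxx !andbT (negPf ab) subrr addr0 mulr1 => /eqP.
by rewrite eq_sym (negPf g0).
Qed.
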